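(* Let $(T,\rho_{T})$ and $(Z,\rho_{Z})$ be metric spaces, and define the metric $\rho_{T}\times\rho_{Z}$ on $T\times Z$ by $(\rho_{T}\times\rho_{Z})((t_{1},z_{1}),(t_{2},z_{2}))=\rho_{T}(t_{1},t_{2})+\rho_{Z}(z_{1},z_{2})$. Then \[\gamma_{2}(T\times Z,\rho_{T}\times\rho_{Z})\leq 3\gamma_{2}(T,\rho_{T})+3\gamma_{2}(Z,\rho_{Z}).\]
   Context: Let $N_{0}=1$ and $N_{k}=2^{2^{k}}$ for $k\geq1$. For a metric space $(T,\rho)$, a sequence $T_{0},T_{1},\ldots\subset T$ is admissible if $|T_{k}|\leq N_{k}$ for all $k\geq0$, and \[\gamma_{2}(T,\rho)=\inf_{\text{admissible }(T_{k})}\ \sup_{t\in T}\sum_{k=0}^{\infty}2^{k/2}\rho(t,T_{k}),\] where $\rho(t,T_{k})=\inf_{t_{k}\in T_{k}}\rho(t,t_{k})$. *)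

(* Defs.v *)
From HB Require Import structures.
From mathcomp Require Import all_boot all_order all_algebra.
From mathcomp Require Import all_classical all_reals.
From mathcomp Require Import all_analysis.
Set Implicit Arguments. Unset Strict Implicit. Unset Printing Implicit Defensive.
Import Order.TTheory GRing.Theory Num.Theory.
Local Open Scope classical_set_scope.
Local Open Scope ring_scope.

Definition is_metric (R : realType) (T : Type) (d : T -> T -> R) : Prop :=
  (forall x y, 0 <= d x y) /\
  (forall x y, d x y = 0 <-> x = y) /\
  (forall x y, d x y = d y x) /\
  (forall x y z, d x z <= d x y + d y z).

Definition Nk (k : nat) : nat := if k is 0 then 1%N else (2 ^ (2 ^ k))%N.

Definition card_le (T : Type) (A : set T) (n : nat) : Prop :=
  exists (m : nat) (f : 'I_m -> T), (m <= n)%N /\ A = f @` [set: 'I_m].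

Definition admissible (T : Type) (Tk : nat -> set T) : Prop :=
  forall k, card_le (Tk k) (Nk k).

Definition dist_to (R : realType) (T : Type) (d : T -> T -> R) (t : T) (A : set T)
  : \bar R := ereal_inf [set (d t a)%:E | a in A].

Definition chain_sum (R : realType) (T : Type) (d : T -> T -> R)
  (Tk : nat -> set T) (t : T) : \bar R :=
  (\sum_(0 <= k <oo) ((Num.sqrt (2 : R)) ^+ k)%:E * dist_to d t (Tk k))%E.

Definition gamma2 (R : realType) (T : Type) (d : T -> T -> R) : \bar R :=
  ereal_inf [set ereal_sup [set chain_sum d Tk t | t in [set: T]]
            | Tk in admissible (T := T)].

Definition prod_metric (R : realType) (T Z : Type) (dT : T -> T -> R)
  (dZ : Z -> Z -> R) : T * Z -> T * Z -> R :=
  fun p q => dT p.1 q.1 + dZ p.2 q.2.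

(* Main.v *)
Require Import Defs.
From HB Require Import structures.
From mathcomp Require Import all_boot all_order all_algebra.
From mathcomp Require Import all_classical all_reals.
From mathcomp Require Import all_analysis.
From mathcomp Require Import lra.
Section Helpers.
Set Implicit Arguments. Unset Strict Implicit. Unset Printing Implicit Defensive.
Import Order.TTheory GRing.Theory Num.Theory.
Definition cardF (F : finType) : nat := #|F|.
Local Open Scope classical_set_scope.
Local Open Scope ring_scope.

Lemma card_le_img (T : Type) (F : finType) (h : F -> T) :
  Defs.card_le (h @` setT) (cardF F).
Proof.
exists (cardF F), (fun i => h (enum_val i)); split => //.
apply/seteqP; split => x [y _ <-].
- by exists (enum_rank y) => //; rewrite enum_rankK.
- by exists (enum_val y).
Qed.

Lemma card_le_mono (T : Type) (A : set T) m n :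
  Defs.card_le A m -> (m <= n)%N -> Defs.card_le A n.
Proof.
move=> [k [f [km ->]]] mn; exists k, f; split => //; exact: leq_trans mn.
Qed.

Lemma Nk_sq k : (Nk k.-1 * Nk k.-1 <= Nk k)%N.
Proof.
case: k => [|[|k]] //=.
by rewrite -expnD addnn -mul2n -expnS.
Qed.

Lemma adm_prod (T Z : Type) (Tk : nat -> set T) (Zk : nat -> set Z) :
  admissible Tk -> admissible Zk ->
  admissible (fun k => Tk k.-1 `*` Zk k.-1).
Proof.
move=> hT hZ k.
have [m [f [mN ->]]] := hT k.-1.
have [n [g [nN ->]]] := hZ k.-1.
have -> : (f @` setT) `*` (g @` setT) =
  (fun p : ('I_m * 'I_n)%type => (f p.1, g p.2)) @` setT.
  apply/seteqP; split => [[x y] /= [[i _ <-] [j _ <-]]|_ [[i j] _ <-]].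
  - by exists (i, j).
  - by split; [exists i | exists j].
have := card_le_img (fun p : ('I_m * 'I_n)%type => (f p.1, g p.2)).
move/card_le_mono => H; apply: H.
rewrite /cardF card_prod !card_ord.
apply: leq_trans (Nk_sq k); exact: leq_mul.
Qed.

Lemma dist_ge0 (R : realType) (T : Type) (d : T -> T -> R) t A :
  (forall x y, 0 <= d x y) -> (0 <= dist_to d t A)%E.
Proof.
move=> d0; apply: le_ereal_inf_tmp => _ [a _ <-]; by rewrite lee_fin.
Qed.

Lemma dist_attain (R : realType) (T : Type) (d : T -> T -> R) t A n :
  Defs.card_le A n -> A = set0 \/ exists2 a, A a & dist_to d t A = (d t a)%:E.
Proof.
move=> [m [f [_ ->]]].
case: m f => [|m] f.
  left; apply/seteqP; split => x // [[i]] //.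
right.
case: (@arg_minP _ _ _ ord0 xpredT (fun j => d t (f j)) isT) => i _ Hi.
exists (f i); first by exists i.
apply/le_anti/andP; split.
  by apply: ereal_inf_lbound; exists (f i) => //; exists i.
by apply: le_ereal_inf_tmp => _ [_ [j _ <-] <-]; rewrite lee_fin; exact: Hi.
Qed.

Lemma dist_prod (R : realType) (T Z : Type) (dT : T -> T -> R) (dZ : Z -> Z -> R)
  t z A B n1 n2 :
  is_metric dT -> is_metric dZ -> Defs.card_le A n1 -> Defs.card_le B n2 ->
  (dist_to (prod_metric dT dZ) (t, z) (A `*` B) <= dist_to dT t A + dist_to dZ z B)%E.
Proof.
move=> mT mZ cA cB.
case: (dist_attain dT t cA) => [->|[a Aa Ha]].
  rewrite /dist_to image_set0 ereal_inf0 addye ?leey //.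
  by rewrite gt_eqF // (lt_le_trans _ (dist_ge0 _ _ mZ.1)).
case: (dist_attain dZ z cB) => [->|[b Bb Hb]].
  rewrite [X in (_ <= _ + X)%E]/dist_to image_set0 ereal_inf0 addey ?leey //.
  by rewrite gt_eqF // (lt_le_trans _ (dist_ge0 _ _ mT.1)).
rewrite Ha Hb; apply: ereal_inf_lbound; exists (a, b) => //.
Qed.

Lemma core (R : realType) (T Z : Type) (dT : T -> T -> R) (dZ : Z -> Z -> R)
  (Tk : nat -> set T) (Zk : nat -> set Z) t z :
  is_metric dT -> is_metric dZ -> admissible Tk -> admissible Zk ->
  (chain_sum (prod_metric dT dZ) (fun k => Tk k.-1 `*` Zk k.-1) (t, z) <=
   3%:E * chain_sum dT Tk t + 3%:E * chain_sum dZ Zk z)%E.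
Proof.
move=> mT mZ hT hZ.
set s := Num.sqrt (2 : R).
have s0 : 0 <= s by exact: sqrtr_ge0.
have s2 : s <= 2.
  have := sqr_sqrtr (ler0n R 2); rewrite -/s => hs; nra.
pose a := fun k => ((s ^+ k)%:E * dist_to dT t (Tk k))%E.
pose b := fun k => ((s ^+ k)%:E * dist_to dZ z (Zk k))%E.
pose c := fun k => ((s ^+ k)%:E * dist_to (prod_metric dT dZ) (t, z) (Tk k.-1 `*` Zk k.-1))%E.
have a0 k : (0 <= a k)%E by apply: mule_ge0; [rewrite lee_fin exprn_ge0|apply: dist_ge0; [exact: mT.1]].
have b0 k : (0 <= b k)%E by apply: mule_ge0; [rewrite lee_fin exprn_ge0|apply: dist_ge0; [exact: mZ.1]].
have c0 k : (0 <= c k)%E.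
  by apply: mule_ge0; [rewrite lee_fin exprn_ge0|apply: dist_ge0 => ? ?; apply: addr_ge0; [exact: mT.1|exact: mZ.1]].
have -> : chain_sum (prod_metric dT dZ) (fun k => Tk k.-1 `*` Zk k.-1) (t, z)
  = (\sum_(0 <= k <oo) c k)%E by [].
have -> : chain_sum dT Tk t = (\sum_(0 <= k <oo) a k)%E by [].
have -> : chain_sum dZ Zk z = (\sum_(0 <= k <oo) b k)%E by [].
set A := (\sum_(0 <= k <oo) a k)%E.
set B := (\sum_(0 <= k <oo) b k)%E.
have A0 : (0 <= A)%E by apply: nneseries_ge0 => k _ _.
have B0 : (0 <= B)%E by apply: nneseries_ge0 => k _ _.
rewrite nneseries_recl // -(nneseries_addn 1 (fun k => c0 k)).
have h0 : (c 0%N <= A + B)%E.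
  apply: (@le_trans _ _ (a 0%N + b 0%N)%E).
    rewrite /c /a /b expr0 !mul1e; exact: (dist_prod _ _ mT mZ (hT 0%N) (hZ 0%N)).
  apply: leeD.
    have := @nneseries_lim_ge R a xpredT 0%N 1%N (fun k _ _ => a0 k).
    by rewrite big_nat1.
  have := @nneseries_lim_ge R b xpredT 0%N 1%N (fun k _ _ => b0 k).
  by rewrite big_nat1.
have h1 : (\sum_(i <oo) c (i + 1)%N <= s%:E * (A + B))%E.
  rewrite /A /B -nneseriesD // -nneseriesZl; last by move=> i _; rewrite adde_ge0.
  apply: lee_nneseries => [i _ _|i _]; first exact: c0.
  rewrite /c addn1 /= exprS EFinM -muleA; apply: lee_wpmul2l; first by rewrite lee_fin.
  rewrite /a /b -ge0_muleDr; [|exact: dist_ge0 mT.1|exact: dist_ge0 mZ.1].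
  apply: lee_wpmul2l; first by rewrite lee_fin exprn_ge0.
  exact: (dist_prod _ _ mT mZ (hT i) (hZ i)).
apply: le_trans (leeD h0 h1) _.
rewrite -[X in (X + _ <= _)%E]mul1e -ge0_muleDl ?lee_fin // -ge0_muleDr //.
apply: lee_wpmul2r; first exact: adde_ge0.
rewrite -EFinD lee_fin; lra.
Qed.

End Helpers.
Import Order.TTheory GRing.Theory Num.Theory.
Local Open Scope ring_scope.

Theorem lemma2p1 (R : realType) (T Z : Type)
  (dT : T -> T -> R) (dZ : Z -> Z -> R) :
  is_metric dT -> is_metric dZ ->
  (gamma2 (prod_metric dT dZ) <= 3%:E * gamma2 dT + 3%:E * gamma2 dZ)%E.
Proof.
move=> mT mZ.
have adm0 (X : Type) : admissible (fun _ : nat => @set0 X).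
  move=> k; exists 0%N, (fun i : 'I_0 => ltac:(exfalso; case: i => m; by rewrite ltn0)).
  split => //; apply/seteqP; split => [x //|x [[m h] _ _]]; by rewrite ltn0 in h.
have ne_case : ~ (exists tz : T * Z, True) ->
    (gamma2 (prod_metric dT dZ) <= 3%:E * gamma2 dT + 3%:E * gamma2 dZ)%E.
  move=> hne; apply: le_trans (leNye _).
  apply: ereal_inf_lbound; exists (fun _ => set0); first exact: adm0.
  apply/le_anti/andP; split; last exact: leNye.
  apply: ge_ereal_sup => _ [tz _ <-]; exfalso; apply: hne; by exists tz.
case: (pselect (exists tz : T * Z, True)) => [[[t0 z0] _]|]; last exact: ne_case.
set ST := fun Tk => ereal_sup [set chain_sum dT Tk t | t in [set: T]].
set SZ := fun Zk => ereal_sup [set chain_sum dZ Zk z | z in [set: Z]].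
have chT Tk t : (0 <= chain_sum dT Tk t)%E.
  apply: nneseries_ge0 => k _ _; apply: mule_ge0; [rewrite lee_fin exprn_ge0 ?sqrtr_ge0 //|exact: dist_ge0 mT.1].
have chZ Zk z : (0 <= chain_sum dZ Zk z)%E.
  apply: nneseries_ge0 => k _ _; apply: mule_ge0; [rewrite lee_fin exprn_ge0 ?sqrtr_ge0 //|exact: dist_ge0 mZ.1].
have ST0 Tk : (0 <= ST Tk)%E.
  by apply: le_trans (chT Tk t0) _; apply: ereal_sup_ubound; exists t0.
have SZ0 Zk : (0 <= SZ Zk)%E.
  by apply: le_trans (chZ Zk z0) _; apply: ereal_sup_ubound; exists z0.
have key Tk Zk : admissible Tk -> admissible Zk ->
    (gamma2 (prod_metric dT dZ) <= 3%:E * ST Tk + 3%:E * SZ Zk)%E.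
  move=> hT hZ.
  apply: (@le_trans _ _ (ereal_sup [set chain_sum (prod_metric dT dZ) (fun k => (Tk k.-1 `*` Zk k.-1)%classic) u | u in [set: T * Z]])).
    by apply: ereal_inf_lbound; exists (fun k => (Tk k.-1 `*` Zk k.-1)%classic) => //; exact: adm_prod.
  apply: ge_ereal_sup => _ [[t z] _ <-].
  apply: le_trans (core t z mT mZ hT hZ) _.
  apply: leeD; apply: lee_wpmul2l => //; apply: ereal_sup_ubound.
    by exists t.
  by exists z.
have gT0 : (0 <= gamma2 dT)%E by apply: le_ereal_inf_tmp => _ [Tk _ <-]; exact: ST0.
have gZ0 : (0 <= gamma2 dZ)%E by apply: le_ereal_inf_tmp => _ [Zk _ <-]; exact: SZ0.
have m3y : (3%:E * +oo = +oo :> \bar R)%E by rewrite mulry gtr0_sg // mul1e.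
case ET: (gamma2 dT) gT0 => [r1| |] // r10; last first.
  rewrite m3y addye ?leey //.
  have h : (0 <= 3%:E * gamma2 dZ)%E by apply: mule_ge0; rewrite ?lee_fin.
  by rewrite gt_eqF // (lt_le_trans _ h) // ltNyr.
case EZ: (gamma2 dZ) gZ0 => [r2| |] // r20; last first.
  rewrite m3y addey ?leey //.
apply/lee_addgt0Pr => e e0.
have : (ereal_inf [set ST Tk | Tk in admissible (T:=T)] < (r1 + e / 6)%:E)%E.
  by rewrite -/(gamma2 dT) ET lte_fin; lra.
move/ereal_inf_lt => [_ [Tk hT <-] lt1].
have : (ereal_inf [set SZ Zk | Zk in admissible (T:=Z)] < (r2 + e / 6)%:E)%E.
  by rewrite -/(gamma2 dZ) EZ lte_fin; lra.
move/ereal_inf_lt => [_ [Zk hZ <-] lt2].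
apply: le_trans (key _ _ hT hZ) _.
apply: le_trans (leeD (lee_wpmul2l _ (ltW lt1)) (lee_wpmul2l _ (ltW lt2))) _; rewrite ?lee_fin //.
lra.
Qed.
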